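(* Let $\mathcal{G}$ be a signed graph on vertex set $\{1,\dots,n\}$ with signed adjacency entries $a_{ij}$ and neighbor sets $N_i$, and assume $\mathcal{G}$ is structurally balanced with gauge transformation $G_t=\mathrm{diag}(\sigma_1,\dots,\sigma_n)$, $\sigma_i\in\{\pm1\}$. Consider the absolute nonlinear flow $$\dot x_i = -\sum_{j\in N_i}\big[f(x_i)-\mathrm{sgn}(a_{ij})f(x_j)\big],\quad i=1,\dots,n,$$ where $f:\mathbb{R}\to\mathbb{R}$ is a smooth odd function. Suppose $\mathcal{G}$ has a non-trivial signed automorphism $\varphi'=g\circ\varphi\circ g$, where $\varphi$ is induced by a non-identity automorphism $\phi$ of $\mathcal{G}$. Then for any vertex $l$ with $\phi(l)=l$ chosen as the leader, the leader-follower network is not accessible from the origin in $\mathbb{R}^{n-1}$. Moreover, the same conclusion holds when $f$ is a smooth even function, provided $\varphi'$ preserves edge signs, i.e. $\mathrm{sgn}(a_{ij})=\mathrm{sgn}(a_{\phi(i)\phi(j)})$ for all edges $ij$.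
   Context: A signed graph has edges with positive or negative weights $a_{ij}$ (nonzero iff $ij$ is an edge). It is structurally balanced if its vertex set admits a bipartition such that edges within each part have positive weight and edges between the parts have negative weight; equivalently there is a gauge transformation $G_t=\mathrm{diag}(\sigma)$, $\sigma_i\in\{\pm1\}$, such that $G_tA_sG_t$ has only nonnegative entries ($A_s$ the signed adjacency matrix), i.e. $\sigma_i\sigma_j=\mathrm{sgn}(a_{ij})$ for every edge $ij$. An automorphism of $\mathcal{G}$ is a permutation $\phi$ of the vertices with $\phi(i)\phi(j)$ an edge iff $ij$ is an edge; it induces $\varphi:\mathbb{R}^n\to\mathbb{R}^n$, $[\varphi(x)]_i=x_{\phi(i)}$. The gauge induces $g:\mathbb{R}^n\to\mathbb{R}^n$, $[g(x)]_i=\sigma_i x_i$. The signed automorphism is $\varphi'=g\circ\varphi\circ g$, so $[\varphi'(x)]_i=\sigma_i\sigma_{\phi(i)}x_{\phi(i)}$; it is non-trivial when $\phi$ is not the identity. For a chosen leader vertex $l$, the leader-follower network is the control system on $\mathbb{R}^{n-1}$ with state $(x_i)_{i\neq l}$, evolving by $\dot x_i=F_i(x)$ for $i\ne l$ where $F$ is the flow's right-hand side and the leader's state $x_l=u$ is treated as the control input. For a control system $\dot x=F(x,u)$, the accessible set $\mathcal{A}(x_0,\le T)$ is the set of all endpoints $\theta(\tau)$, $0\le\tau\le T$, of trajectories $\theta$ with $\theta(0)=x_0$; the system is accessible from $x_0$ if $\mathcal{A}(x_0,\le T)$ has nonempty interior for every $T>0$. *)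

(* Defs.v *)
From HB Require Import structures.
From mathcomp Require Import all_boot all_order all_algebra all_fingroup.
From mathcomp Require Import all_classical all_reals all_analysis.
Set Implicit Arguments. Unset Strict Implicit. Unset Printing Implicit Defensive.
Import Order.TTheory GRing.Theory Num.Theory.
Import numFieldNormedType.Exports.
Local Open Scope classical_set_scope.
Local Open Scope ring_scope.

(* A signed graph on the vertex set 'I_N is given by its signed adjacency
   matrix a : ij is an edge iff a i j != 0; the graph is undirected
   (a symmetric) and has no self-loops. *)
Definition signed_graph (R : realType) (N : nat) (a : 'I_N -> 'I_N -> R) :=
  (forall i j, a i j = a j i) /\ (forall i, a i i = 0).

Definition balanced_gauge (R : realType) (N : nat) (a : 'I_N -> 'I_N -> R)
  (sigma : 'I_N -> R) :=
  (forall i, sigma i = 1 \/ sigma i = -1) /\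
  (forall i j, a i j != 0 -> sigma i * sigma j = Num.sg (a i j)).

Definition graph_automorphism (R : realType) (N : nat) (a : 'I_N -> 'I_N -> R)
  (phi : {perm 'I_N}) :=
  forall i j, (a (phi i) (phi j) != 0) = (a i j != 0).

Definition sign_preserving (R : realType) (N : nat) (a : 'I_N -> 'I_N -> R)
  (phi : {perm 'I_N}) :=
  forall i j, a i j != 0 -> Num.sg (a i j) = Num.sg (a (phi i) (phi j)).

Definition smooth (R : realType) (f : R -> R) :=
  forall (k : nat) (x : R), derivable (derive1n k f) x 1.

Definition odd_fun (R : realType) (f : R -> R) := forall x, f (- x) = - f x.
Definition even_fun (R : realType) (f : R -> R) := forall x, f (- x) = f x.

Definition absflow (R : realType) (N : nat) (a : 'I_N -> 'I_N -> R)
  (f : R -> R) (x : 'I_N -> R) (i : 'I_N) : R :=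
  - \sum_(j < N | a i j != 0) (f (x i) - Num.sg (a i j) * f (x j)).

(* Leader-follower network with n+1 vertices and leader l: the follower
   state is y : 'rV_n (coordinate k <-> vertex lift l k), the leader's
   state is the control u. *)
Definition full_state (R : realType) (n : nat) (l : 'I_n.+1)
  (y : 'rV[R]_n) (u : R) : 'I_n.+1 -> R :=
  fun j => match unlift l j with Some k => y ord0 k | None => u end.

Definition lf_field (R : realType) (n : nat) (a : 'I_n.+1 -> 'I_n.+1 -> R)
  (f : R -> R) (l : 'I_n.+1) (y : 'rV[R]_n) (u : R) : 'rV[R]_n :=
  \row_k absflow a f (full_state l y u) (lift l k).

Definition lf_trajectory (R : realType) (n : nat) (a : 'I_n.+1 -> 'I_n.+1 -> R)
  (f : R -> R) (l : 'I_n.+1) (theta : R -> 'rV[R]_n) (tau : R) :=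
  exists u : R -> R,
    {within `[0, tau], continuous theta} /\
    (forall t, 0 < t < tau ->
       derivable theta t 1 /\ derive1 theta t = lf_field a f l (theta t) (u t)).

Definition accessible_set (R : realType) (n : nat) (a : 'I_n.+1 -> 'I_n.+1 -> R)
  (f : R -> R) (l : 'I_n.+1) (x0 : 'rV[R]_n) (T : R) : set 'rV[R]_n :=
  [set z | exists (theta : R -> 'rV[R]_n) (tau : R),
     [/\ 0 <= tau <= T, theta 0 = x0, lf_trajectory a f l theta tau
       & theta tau = z]].

Definition lf_accessible (R : realType) (n : nat) (a : 'I_n.+1 -> 'I_n.+1 -> R)
  (f : R -> R) (l : 'I_n.+1) (x0 : 'rV[R]_n) :=
  forall T : R, 0 < T -> interior (accessible_set a f l x0 T) !=set0.

(* Main.v *)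
Require Import Defs.
From HB Require Import structures.
From mathcomp Require Import all_boot all_order all_algebra all_fingroup.
From mathcomp Require Import all_classical all_reals all_analysis.
Import Order.TTheory GRing.Theory Num.Theory.
Import numFieldNormedType.Exports.
From mathcomp Require Import ring lra.
Local Open Scope classical_set_scope.
Local Open Scope ring_scope.
Lemma sum_ineq (R : realFieldType) n (d D : 'I_n -> R) B : 0 <= B ->
  (forall k, `|D k| <= B * \sum_m `|d m|) ->
  \sum_k (d k * D k + d k * D k) <= 2 * B * n%:R * \sum_k d k ^+ 2.
Proof.
move=> B0 hD.
apply: (@le_trans _ _ (\sum_k (2 * `|d k| * (B * \sum_m `|d m|)))).
  apply: ler_sum => k _.
  have h1 : d k * D k <= `|d k| * `|D k| by rewrite -normrM ler_norm.
  have h2 : `|d k| * `|D k| <= `|d k| * (B * \sum_m `|d m|) by apply: ler_wpM2l.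
  lra.
have -> : \sum_k (2 * `|d k| * (B * \sum_m `|d m|)) = B * \sum_k \sum_m (2 * `|d k| * `|d m|).
  rewrite [RHS]mulr_sumr; apply: eq_bigr => k _; rewrite -mulr_sumr; ring.
apply: (@le_trans _ _ (B * \sum_k \sum_m (d k ^+ 2 + d m ^+ 2))).
  apply: ler_wpM2l => //; apply: ler_sum => k _; apply: ler_sum => m _.
  have := sqr_ge0 (`|d k| - `|d m|).
  rewrite -(real_normK (num_real (d k))) -(real_normK (num_real (d m))).
  move=> ?; nra.
have -> : 2 * B * n%:R * \sum_k d k ^+ 2 = B * (2 * n%:R * \sum_k d k ^+ 2) by ring.
apply: ler_wpM2l => //.
under eq_bigr do rewrite big_split /=.
rewrite big_split /= [X in _ + X]exchange_big /=.
have -> : \sum_(i < n) \sum_(i0 < n) d i ^+ 2 = n%:R * \sum_(k < n) d k ^+ 2.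
  rewrite mulr_sumr; apply: eq_bigr => i _.
  by rewrite -[LHS]/(\sum_(i0 in 'I_n) d i ^+ 2) sumr_const card_ord mulr_natl.
lra.
Qed.
Lemma lin_der (R : realType) (C t : R) : is_derive t 1 (fun s : R => - (C * s)) (- C).
Proof.
have h1 : is_derive t 1 (- (C *: (@id R))) (- (C *: 1)) by apply: is_deriveN; apply: is_deriveZ.
by move: h1; rewrite scaler1.
Qed.

Lemma exp_der (R : realType) (C t : R) : is_derive t 1 (fun s : R => expR (- (C * s))) (expR (- (C * t)) * - C).
Proof.
have := @is_derive1_comp R (@expR R) (fun s : R => - (C * s)) t _ _ (is_derive_expR _) (@lin_der R C t).
done.
Qed.

Lemma gronwall0 (R : realType) (h : R -> R) (C tau : R) :
  {within `[0, tau], continuous h} ->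
  (forall t, 0 < t < tau -> derivable h t 1 /\ derive1 h t <= C * h t) ->
  h 0 = 0 -> (forall t, 0 <= t <= tau -> 0 <= h t) ->
  forall t, 0 <= t <= tau -> h t = 0.
Proof.
move=> hc hd h0 hpos t /andP[t0 tt].
pose e := fun s : R => expR (- (C * s)).
pose g : R -> R := h * e.
have gd : forall s, s \in `]0, tau[ -> is_derive s 1 g (h s * (e s * - C) + e s * derive1 h s).
  move=> s; rewrite in_itv /= => /hd [hs _].
  have he : is_derive s 1 h (derive1 h s) by rewrite derive1E; apply: derivableP.
  have := @is_deriveM R R h e s 1 _ _ he (@exp_der R C s).
  done.
have gle : {in `[0, tau] &, {homo g : x y /~ x <= y}}.
  apply: ler0_derive1_le_cc.
  - by move=> s /gd [].
  - move=> s sI; have [_ hh] := gd s sI; rewrite derive1E hh.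
    move: sI; rewrite in_itv /= => /hd [_ hle].
    have e0 : 0 < e s by apply: expR_gt0.
    have -> : h s * (e s * - C) + e s * derive1 h s = e s * (derive1 h s - C * h s) by ring.
    by apply: mulr_ge0_le0; [exact: ltW | rewrite subr_le0].
  - move=> s; apply: continuousM; first exact: hc.
    apply: continuous_subspaceT => x.
    have hx := (@exp_der R C x).(ex_derive).
    by apply/differentiable_continuous/derivable1_diffP.
have : g t <= g 0 by apply: gle => //; rewrite in_itv /= ?lexx ?t0 ?tt //= (le_trans t0 tt).
rewrite /g !fctE h0 mul0r => gt0.
apply/eqP; rewrite eq_le hpos ?t0 ?tt // andbT.
have e0 : 0 < e t by apply: expR_gt0.
by rewrite -(pmulr_lle0 _ e0).
Qed.
Lemma smooth_lip (R : realType) (f : R -> R) : smooth f -> forall M : R,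
  exists K : R, 0 <= K /\ forall x y : R, `|x| <= M -> `|y| <= M -> `|f x - f y| <= K * `|x - y|.
Proof.
move=> sf M.
have d0 : forall x, derivable f x 1 by move=> x; exact: (sf 0%N x).
have d1 : forall x, derivable (derive1 f) x 1 by move=> x; exact: (sf 1%N x).
have cf : continuous f by move=> x; apply/differentiable_continuous/derivable1_diffP.
have cdf : continuous (derive1 f) by move=> x; apply/differentiable_continuous/derivable1_diffP.
have [MM|MM] := leP (- M) M; last first.
  exists 0; split => // x y xM; exfalso.
  have := le_trans (normr_ge0 x) xM; lra.
have [c cI cmax] := @EVT_max R (fun x => `|derive1 f x|) (- M) M MM
  (continuous_subspaceT (fun x => continuous_comp (cdf x) (@norm_continuous _ R^o _))).
exists `|derive1 f c|; split => // x y.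
wlog xy : x y / x <= y.
  move=> H xM yM; have [le|le] := leP x y; first exact: H.
  by rewrite distrC (distrC x); apply: H => //; exact: ltW.
move=> xM yM.
have [d dI eq] := @MVT_segment R f (derive1 f) x y xy
  (fun z _ => ltac:(rewrite derive1E; exact: derivableP)) (continuous_subspaceT (fun z => cf z)).
rewrite distrC eq normrM distrC ler_wpM2r //.
apply: cmax; move: dI; rewrite !in_itv /= => /andP[xd dy].
move: xM yM; rewrite !ler_norml => /andP[? ?] /andP[? ?].
apply/andP; split; lra.
Qed.

Lemma uniq_coord (R : realType) (n : nat) (z1 z2 : 'I_n -> R -> R) (B tau : R) :
  0 <= B ->
  (forall k, {within `[0, tau], continuous (z1 k)}) ->
  (forall k, {within `[0, tau], continuous (z2 k)}) ->
  (forall t, 0 < t < tau -> forall k, derivable (z1 k) t 1 /\ derivable (z2 k) t 1 /\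
     `|derive1 (z1 k) t - derive1 (z2 k) t| <= B * \sum_m `|z1 m t - z2 m t|) ->
  (forall k, z1 k 0 = z2 k 0) ->
  forall t, 0 <= t <= tau -> forall k, z1 k t = z2 k t.
Proof.
move=> B0 c1 c2 hd h0.
pose h := fun t => \sum_k (z1 k t - z2 k t) ^+ 2.
have hc : {within `[0, tau], continuous h}.
  move=> x; apply: cvg_big; first exact: add_continuous.
  move=> k _; rewrite expr2.
  apply: cvgM; apply: cvgB; [exact: c1|exact: c2|exact: c1|exact: c2].
have H := @gronwall0 R h (2 * B * n%:R) tau hc.
have hfun : h = \sum_(k < n) ((z1 k - z2 k) * (z1 k - z2 k)).
  apply/funext => t; rewrite /h fct_sumE; apply: eq_bigr => k _.
  by rewrite expr2.
move=> t tI; suff : h t = 0.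
  move/eqP; rewrite psumr_eq0 => [/allP hall k|k _]; last exact: sqr_ge0.
  by apply/eqP; rewrite -subr_eq0 -sqrf_eq0; apply: hall; rewrite mem_index_enum.
apply: H => //.
- move=> s sI.
  have isd : forall k, is_derive s 1 ((z1 k - z2 k) * (z1 k - z2 k))
      ((z1 k s - z2 k s) *: (derive1 (z1 k) s - derive1 (z2 k) s) +
       (z1 k s - z2 k s) *: (derive1 (z1 k) s - derive1 (z2 k) s)).
    move=> k; have [d1 [d2 _]] := hd s sI k.
    have e1 : is_derive s 1 (z1 k) (derive1 (z1 k) s) by rewrite derive1E; exact: derivableP.
    have e2 : is_derive s 1 (z2 k) (derive1 (z2 k) s) by rewrite derive1E; exact: derivableP.
    exact: is_deriveM.
  have := is_derive_sum isd; rewrite -hfun => -[dh Dh].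
  split => //; rewrite derive1E Dh.
  apply: sum_ineq => // k; have [_ [_ ]] := hd s sI k; done.
- by rewrite /h big1 // => k _; rewrite h0 subrr expr0n.
- by move=> s _; apply: sumr_ge0 => k _; exact: sqr_ge0.
Qed.

Lemma absflow_sym (R : realType) (N : nat) (a : 'I_N -> 'I_N -> R) (f : R -> R)
  (phi : {perm 'I_N}) (c : 'I_N -> R) :
  graph_automorphism a phi ->
  (forall i x, f (c i * x) = c i * f x) ->
  (forall i j, a i j != 0 -> Num.sg (a i j) * c j = c i * Num.sg (a (phi i) (phi j))) ->
  forall x i, absflow a f (fun j => c j * x (phi j)) i = c i * absflow a f x (phi i).
Proof.
move=> ga hf hs x i; rewrite /absflow.
rewrite (reindex_inj (@perm_inj _ phi) (P := fun j => a (phi i) j != 0)) /=.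
rewrite mulrN; congr (- _); rewrite mulr_sumr.
under [RHS]eq_bigl do rewrite ga.
apply: eq_bigr => j aij.
rewrite !hf mulrBr mulrA hs // ; ring.
Qed.

Definition psi (R : realType) (n : nat) (l : 'I_n.+1) (phi : {perm 'I_n.+1})
  (c : 'I_n.+1 -> R) (y : 'rV[R]_n) : 'rV[R]_n :=
  \row_k (c (lift l k) * full_state l y 0 (phi (lift l k))).
Arguments psi {R n}.

Lemma phi_lift (n : nat) (l : 'I_n.+1) (phi : {perm 'I_n.+1}) k :
  phi l = l -> exists k', phi (lift l k) = lift l k'.
Proof.
move=> pl; case: (unliftP l (phi (lift l k))) => [k' ->|e]; first by exists k'.
by exfalso; move: e; rewrite -{2}pl => /perm_inj /eqP; rewrite eq_sym (negbTE (neq_lift _ _)).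
Qed.

Arguments phi_lift {n l phi}.

Lemma full_psi (R : realType) (n : nat) (l : 'I_n.+1) (phi : {perm 'I_n.+1})
  (c : 'I_n.+1 -> R) y u :
  phi l = l -> c l = 1 ->
  full_state l (psi l phi c y) u = fun j => c j * full_state l y u (phi j).
Proof.
move=> pl cl; apply/funext => j; rewrite /full_state.
case: (unliftP l j) => [k ->|->].
  rewrite /psi mxE; have [k' ->] := phi_lift k pl.
  by rewrite /full_state liftK.
by rewrite pl cl mul1r unlift_none.
Qed.

Lemma field_psi (R : realType) (n : nat) (a : 'I_n.+1 -> 'I_n.+1 -> R) (f : R -> R)
  (l : 'I_n.+1) (phi : {perm 'I_n.+1}) (c : 'I_n.+1 -> R) y u :
  graph_automorphism a phi ->
  (forall i x, f (c i * x) = c i * f x) ->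
  (forall i j, a i j != 0 -> Num.sg (a i j) * c j = c i * Num.sg (a (phi i) (phi j))) ->
  phi l = l -> c l = 1 ->
  lf_field a f l (psi l phi c y) u = psi l phi c (lf_field a f l y u).
Proof.
move=> ga hf hs pl cl; apply/rowP => k.
rewrite /lf_field /psi !mxE full_psi // absflow_sym //.
have [k' e] := phi_lift k pl; rewrite e /full_state liftK mxE.
done.
Qed.

Lemma field_lip (R : realType) (n : nat) (a : 'I_n.+1 -> 'I_n.+1 -> R) (f : R -> R)
  (l : 'I_n.+1) (K M : R) : 0 <= K ->
  (forall x y, `|x| <= M -> `|y| <= M -> `|f x - f y| <= K * `|x - y|) ->
  forall (y1 y2 : 'rV[R]_n) u k, (forall m, `|y1 ord0 m| <= M) -> (forall m, `|y2 ord0 m| <= M) ->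
  `|lf_field a f l y1 u ord0 k - lf_field a f l y2 u ord0 k| <=
     (2 * K * (n.+1)%:R) * \sum_m `|y1 ord0 m - y2 ord0 m|.
Proof.
move=> K0 hf y1 y2 u k b1 b2.
set S := \sum_m _.
have S0 : 0 <= S by apply: sumr_ge0 => m _; exact: normr_ge0.
have hj : forall j, `|f (full_state l y1 u j) - f (full_state l y2 u j)| <= K * S.
  move=> j; rewrite /full_state; case: (unliftP l j) => [m _|_].
    apply: le_trans (hf _ _ (b1 m) (b2 m)) _; apply: ler_wpM2l => //.
    rewrite /S (bigD1 m) //= lerDl; apply: sumr_ge0 => i _; exact: normr_ge0.
  by rewrite subrr normr0 mulr_ge0.
rewrite /lf_field !mxE /absflow opprK addrC -sumrB.
apply: le_trans (ler_norm_sum _ _ _) _.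
apply: (@le_trans _ _ (\sum_(j < n.+1 | a (lift l k) j != 0) (2 * K * S))).
  apply: ler_sum => j _.
  set X1 := full_state l y1 u; set X2 := full_state l y2 u.
  have -> : f (X2 (lift l k)) - Num.sg (a (lift l k) j) * f (X2 j) -
     (f (X1 (lift l k)) - Num.sg (a (lift l k) j) * f (X1 j)) =
     - (f (X1 (lift l k)) - f (X2 (lift l k))) + Num.sg (a (lift l k) j) * (f (X1 j) - f (X2 j)) by ring.
  apply: le_trans (ler_normD _ _) _; rewrite normrN normrM.
  have h1 := hj (lift l k); have h2 := hj j.
  have hs : `|Num.sg (a (lift l k) j)| <= 1.
    by case: sgrP; rewrite ?normr0 ?normr1 ?normrN1.
  have := normr_ge0 (f (X1 j) - f (X2 j)).
  have := normr_ge0 (Num.sg (a (lift l k) j)).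
  nra.
rewrite big_mkcond /=.
apply: (@le_trans _ _ (\sum_(j < n.+1) (2 * K * S))).
  apply: ler_sum => j _; case: ifP => _ //.
  by rewrite !mulr_ge0.
rewrite -[X in X <= _]/(\sum_(j in 'I_n.+1) (2 * K * S)) sumr_const card_ord.
rewrite -mulr_natr; lra.
Qed.

Lemma coord_within (R : realType) (n : nat) (th : R -> 'rV[R]_n) (A : set R) k :
  {within A, continuous th} -> {within A, continuous (fun t => th t ord0 k)}.
Proof.
move=> hc x.
exact: (continuous_comp (hc x) (@coord_continuous R _ _ ord0 k (th x))).
Qed.

Lemma coord_der (R : realType) (n : nat) (th : R -> 'rV[R]_n) t k :
  derivable th t 1 -> derivable (fun s => th s ord0 k) t 1 /\
    derive1 (fun s => th s ord0 k) t = derive1 th t ord0 k.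
Proof.
move=> hd; split; first exact: ((derivable_mxP th t 1).1 hd ord0 k).
by rewrite !derive1E derive_mx // mxE.
Qed.

Lemma traj_bound (R : realType) (n : nat) (th : R -> 'rV[R]_n) (tau : R) :
  0 <= tau -> {within `[0, tau], continuous th} ->
  exists M : R, 0 <= M /\ forall t, 0 <= t <= tau -> forall m, `|th t ord0 m| <= M.
Proof.
move=> t0 hc.
have cpt := continuous_compact hc (@segment_compact R 0 tau).
have := compact_bounded cpt.
move=> [M0 [_ HM]].
have HM1 := HM (`|M0| + 1) ltac:(have := ler_norm M0; lra).
have h0 : 0 <= `|th 0| by exact: normr_ge0.
exists (`|M0| + 1); split; first by have := normr_ge0 M0; lra.
move=> t tI m.
have : `|th t| <= `|M0| + 1.
  apply: HM1; exists t => //=; rewrite in_itv /= tI //.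
apply: le_trans.
rewrite [leRHS]/Num.Def.normr/= mx_normrE.
apply: le_trans; last exact: (le_bigmax _ _ (ord0, m)).
done.
Qed.

Lemma traj_fixed (R : realType) (n : nat) (a : 'I_n.+1 -> 'I_n.+1 -> R) (f : R -> R)
  (l : 'I_n.+1) (phi : {perm 'I_n.+1}) (c : 'I_n.+1 -> R) (th : R -> 'rV[R]_n) (tau : R) :
  graph_automorphism a phi ->
  (forall i x, f (c i * x) = c i * f x) ->
  (forall i j, a i j != 0 -> Num.sg (a i j) * c j = c i * Num.sg (a (phi i) (phi j))) ->
  phi l = l -> c l = 1 -> (forall i, `|c i| = 1) -> smooth f ->
  0 <= tau -> th 0 = 0 -> lf_trajectory a f l th tau ->
  psi l phi c (th tau) = th tau.
Proof.
move=> ga hf hs pl cl cn sf t0 th0 [u [hc hd]].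
have [M [M0 hM]] := @traj_bound R n th tau t0 hc.
have [K [K0 hK]] := @smooth_lip R f sf M.
pose z1 := fun k t => th t ord0 k.
pose z2 := fun k t => psi l phi c (th t) ord0 k.
have z2E : forall k, exists k', z2 k = fun t => c (lift l k) * z1 k' t.
  move=> k; have [k' e] := phi_lift k pl; exists k'.
  by apply/funext => t; rewrite /z2 /psi mxE e /full_state liftK.
have psiM : forall t, 0 <= t <= tau -> forall m, `|psi l phi c (th t) ord0 m| <= M.
  move=> t tI m; have [k' e] := phi_lift m pl.
  by rewrite /psi mxE e /full_state liftK normrM cn mul1r; apply: hM.
have key := @uniq_coord R n z1 z2 (2 * K * (n.+1)%:R) tau
  ltac:(by rewrite !mulr_ge0).
have : forall t, 0 <= t <= tau -> forall k, z1 k t = z2 k t.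
  apply: key.
  - by move=> k; apply: coord_within.
  - move=> k; have [k' ->] := z2E k.
    move=> x; apply: cvgM; first exact: cvg_cst.
    exact: coord_within.
  - move=> t tI k.
    have tI' : 0 <= t <= tau by move: tI => /andP[? ?]; apply/andP; split; apply: ltW.
    have [dth Dth] := hd t tI.
    have [k' ek] := phi_lift k pl.
    have e : z2 k = fun s => c (lift l k) * z1 k' s.
      by apply/funext => s; rewrite /z2 /psi mxE ek /full_state liftK.
    have [d1 D1] := @coord_der R n th t k dth.
    have [d1' D1'] := @coord_der R n th t k' dth.
    have dz2 : is_derive t 1 (z2 k) (c (lift l k) * derive1 (z1 k') t).
      rewrite e; have : is_derive t 1 (c (lift l k) *: z1 k') (c (lift l k) *: derive1 (z1 k') t).
        apply: is_deriveZ; rewrite derive1E; exact: derivableP.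
      done.
    split; first exact: d1.
    split; first by case: dz2.
    have D2 : derive1 (z2 k) t = c (lift l k) * derive1 (z1 k') t.
      by rewrite derive1E; apply: derive_val.
    rewrite D2.

    rewrite /z1 D1 D1' Dth.
    have -> : c (lift l k) * lf_field a f l (th t) (u t) ord0 k' =
              lf_field a f l (psi l phi c (th t)) (u t) ord0 k.
      by rewrite field_psi // /psi [in RHS]mxE ek /full_state liftK.
    by apply: (@field_lip R n a f l K M K0 hK); [exact: hM t tI' | exact: psiM t tI'].
  - move=> k; have [k' ->] := z2E k.
    by rewrite /z1 /z2 /psi th0 !mxE mulr0.
move=> H; apply/rowP => k.
have := H tau; rewrite t0 lexx => /(_ isT k).
by rewrite /z1 /z2 => ->.
Qed.

Lemma not_acc (R : realType) (n : nat) (a : 'I_n.+1 -> 'I_n.+1 -> R) (f : R -> R)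
  (l : 'I_n.+1) (phi : {perm 'I_n.+1}) (c : 'I_n.+1 -> R) :
  graph_automorphism a phi ->
  (forall i x, f (c i * x) = c i * f x) ->
  (forall i j, a i j != 0 -> Num.sg (a i j) * c j = c i * Num.sg (a (phi i) (phi j))) ->
  phi l = l -> c l = 1 -> (forall i, `|c i| = 1) -> smooth f -> phi != 1%g ->
  ~ lf_accessible a f l 0.
Proof.
move=> ga hf hs pl cl cn sf phi1 acc.
have hfix : forall w, accessible_set a f l 0 1 w -> psi l phi c w = w.
  move=> w [th [tau [/andP[t0 _] th0 htr <-]]].
  exact: (@traj_fixed R n a f l phi c th tau ga hf hs pl cl cn sf t0 th0 htr).
have [i phii] : exists i, phi i != i.
  apply/existsP; move: phi1; apply: contraR; rewrite negb_exists => /forallP H.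
  by apply/eqP/permP => i; rewrite perm1; apply/eqP; move: (H i); rewrite negbK.
have [k ik] : exists k, i = lift l k.
  case: (unliftP l i) => [k ->|e]; first by exists k.
  by move: phii; rewrite e pl eqxx.
have [k' ek] := phi_lift k pl.
have kk : k' != k by apply: contraNneq phii => e; rewrite ik ek e.
have [z zint] := acc 1 ltr01.
move: zint; rewrite /interior /= => /nbhs_ballP [e /= e0 sub].
pose v : 'rV[R]_n := \row_j (if j == k then e / 2 else 0).
have bw : ball z e (z + v).
  rewrite -ball_normE /= opprD addNKr normrN.
  rewrite /Num.Def.normr /= mx_normrE.
  apply: (@le_lt_trans _ _ (e / 2)); last by lra.
  have e20 : 0 <= e / 2 by rewrite divr_ge0 // ltW.
  apply: bigmax_le => [//|ij _].
  rewrite mxE; case: ifP => _; first by rewrite ger0_norm.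
  by rewrite normr0.
have h1 := hfix _ (sub _ bw).
have h2 := hfix _ (sub _ (ballxx _ e0)).
have e1 : (psi l phi c (z + v)) ord0 k = (z + v) ord0 k by rewrite h1.
have e2 : (psi l phi c z) ord0 k = z ord0 k by rewrite h2.
move: e1 e2; rewrite /psi !mxE ek /full_state liftK !mxE eqxx (negbTE kk) addr0 => ->.
lra.
Qed.

Theorem theorem4 (R : realType) (n : nat) (a : 'I_n.+1 -> 'I_n.+1 -> R)
  (sigma : 'I_n.+1 -> R) (phi : {perm 'I_n.+1}) (f : R -> R) (l : 'I_n.+1) :
  signed_graph a ->
  balanced_gauge a sigma ->
  graph_automorphism a phi ->
  phi != 1%g ->
  phi l = l ->
  smooth f ->
  (odd_fun f \/ (even_fun f /\ sign_preserving a phi)) ->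
  ~ lf_accessible a f l 0.
Proof.
move=> _ [sgn sgE] ga phi1 pl sf [fodd|[_ sp]].
- have sq : forall i, sigma i * sigma i = 1.
    by move=> i; case: (sgn i) => ->; rewrite ?mulr1 ?mulrNN ?mulr1.
  have cpm : forall i, sigma i * sigma (phi i) = 1 \/ sigma i * sigma (phi i) = -1.
    move=> i; case: (sgn i) => ->; case: (sgn (phi i)) => ->;
      rewrite ?mulr1 ?mulrN1 ?mulN1r ?opprK; by [left|right].
  apply: (@not_acc R n a f l phi (fun i => sigma i * sigma (phi i))) => //.
  + move=> i x; case: (cpm i) => ->; first by rewrite !mul1r.
    by rewrite !mulN1r fodd.
  + move=> i j aij.
    have aij' : a (phi i) (phi j) != 0 by rewrite ga.
    rewrite -(sgE _ _ aij) -(sgE _ _ aij').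
    have -> : sigma i * sigma j * (sigma j * sigma (phi j)) =
      sigma i * (sigma j * sigma j) * sigma (phi j) by ring.
    have -> : sigma i * sigma (phi i) * (sigma (phi i) * sigma (phi j)) =
      sigma i * (sigma (phi i) * sigma (phi i)) * sigma (phi j) by ring.
    by rewrite !sq.
  + by rewrite pl sq.
  + by move=> i; case: (cpm i) => ->; rewrite ?normrN normr1.
- apply: (@not_acc R n a f l phi (fun _ => 1)) => //.
  + by move=> i x; rewrite !mul1r.
  + by move=> i j aij; rewrite mulr1 mul1r sp.
  + by move=> i; rewrite normr1.
Qed.
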